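(* Let $G$ be an oriented graph on $[n]$ with $|\mathcal{P}(G)|\ge 1$, and suppose the poset $P=([n],\le_G)$ has dimension $2$. Then \[\max_{\sigma,\rho\in\mathcal{P}(G)} d_K(\sigma,\rho)=|I(P)|.\]
   Context: Write a permutation $\sigma\in S_n$ as $\sigma=\sigma_1\cdots\sigma_n$. A permutation $\sigma$ satisfies an oriented graph $G=([n],E)$ if $\sigma_u>\sigma_v$ for every oriented edge $u\to v\in E$; $\mathcal{P}(G)$ is the set of permutations satisfying $G$. Write $u\rightsquigarrow v$ if there is an oriented path from $u$ to $v$ in $G$. The poset $P=([n],\le_G)$ is defined by $a\le_G b$ iff $a\rightsquigarrow b$ or $a=b$. The dimension of a poset is the smallest number of total orders on its ground set whose intersection is the poset's order. $I(P)=\{(i,j): i<j,\ i\not\rightsquigarrow j,\ j\not\rightsquigarrow i\}$ is the set of incomparable pairs. For $\sigma,\rho\in S_n$, a pair $i<j$ is discordant if $(\sigma_i-\sigma_j)(\rho_i-\rho_j)<0$; $d_K(\sigma,\rho)$ (Kendall-Tau metric) is the number of discordant pairs. *)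

(* Defs.v *)
From mathcomp Require Import all_boot all_order all_algebra all_fingroup.
Set Implicit Arguments. Unset Strict Implicit. Unset Printing Implicit Defensive.
Import GRing.Theory Num.Theory.

Definition oriented_graph (n : nat) (E : rel 'I_n) : Prop :=
  (forall u, ~~ E u u) /\ (forall u v, E u v -> ~~ E v u).

Definition satisfies (n : nat) (E : rel 'I_n) (s : {perm 'I_n}) : bool :=
  [forall u, forall v, E u v ==> (s v < s u)%N].

Definition leG (n : nat) (E : rel 'I_n) : rel 'I_n := connect E.

Definition reach (n : nat) (E : rel 'I_n) (u v : 'I_n) : bool :=
  [exists w, E u w && connect E w v].

Definition total_order (n : nat) (L : rel 'I_n) : Prop :=
  reflexive L /\ antisymmetric L /\ transitive L /\ total L.

Definition realizer (n : nat) (R : rel 'I_n) (k : nat) : Prop :=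
  exists L : 'I_k -> rel 'I_n,
    (forall i, total_order (L i)) /\
    (forall a b, R a b = [forall i, L i a b]).

Definition poset_dim (n : nat) (R : rel 'I_n) (d : nat) : Prop :=
  realizer R d /\ (forall k, (k < d)%N -> ~ realizer R k).

Definition incomparable_pairs (n : nat) (E : rel 'I_n) : {set 'I_n * 'I_n} :=
  [set p : 'I_n * 'I_n | [&& (p.1 < p.2)%N, ~~ reach E p.1 p.2 & ~~ reach E p.2 p.1]].

Definition discordant (n : nat) (s r : {perm 'I_n}) (i j : 'I_n) : bool :=
  (((s i)%:Z - (s j)%:Z) * ((r i)%:Z - (r j)%:Z) < 0)%R.

Definition dK (n : nat) (s r : {perm 'I_n}) : nat :=
  #|[set p : 'I_n * 'I_n | (p.1 < p.2)%N && discordant s r p.1 p.2]|.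

(* Main.v *)
Require Import Defs.
From mathcomp Require Import all_boot all_order all_algebra all_fingroup.
Import GRing.Theory Num.Theory.
Set Implicit Arguments. Unset Strict Implicit. Unset Printing Implicit Defensive.

Definition cnt n (L : rel 'I_n) (u : 'I_n) := #|[pred w | L u w && (w != u)]|.

Lemma cnt_lt n (L : rel 'I_n) u : (cnt L u < n)%N.
Proof.
rewrite /cnt.
have H := cardC1 u; rewrite card_ord in H.
have Hn := ltn_ord u.
apply: (@leq_ltn_trans #|predC1 u|).
  apply: subset_leq_card; apply/subsetP => w; rewrite !inE => /andP[_ ->] //.
by rewrite H ltn_predL; exact: leq_ltn_trans (leq0n _) Hn.
Qed.

Lemma cnt_mono n (L : rel 'I_n) u v : total_order L -> L u v -> u != v ->
  (cnt L v < cnt L u)%N.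
Proof.
move=> [Lr [La [Lt _]]] Luv Nuv.
apply: proper_card; apply/properP; split.
  apply/subsetP => w; rewrite !inE => /andP[Lvw Nwv].
  rewrite (Lt _ _ _ Luv Lvw) /=.
  apply/eqP => Ewu; subst w.
  by move/negP: Nuv; apply; apply/eqP; apply: La; rewrite Luv Lvw.
exists v; first by rewrite !inE Luv eq_sym Nuv.
by rewrite !inE eqxx andbF.
Qed.

Lemma cnt_inj n (L : rel 'I_n) : total_order L ->
  injective (fun u => Ordinal (cnt_lt L u)).
Proof.
move=> TL u v /(congr1 val) /= H.
apply/eqP; apply/negPn/negP => Nuv.
have [_ [_ [_ Tot]]] := TL.
case/orP: (Tot u v) => Luv.
  by have := cnt_mono TL Luv Nuv; rewrite H ltnn.
have Nvu : v != u by rewrite eq_sym.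
by have := cnt_mono TL Luv Nvu; rewrite H ltnn.
Qed.

Definition lperm n (L : rel 'I_n) (TL : total_order L) : {perm 'I_n} :=
  perm (cnt_inj TL).

Lemma lpermE n (L : rel 'I_n) (TL : total_order L) u :
  nat_of_ord (lperm TL u) = cnt L u.
Proof. by rewrite /lperm permE. Qed.

Lemma sat_connect n (E : rel 'I_n) s w j :
  satisfies E s -> connect E w j -> (s j <= s w)%N.
Proof.
move=> Hs /connectP [p Hp ->] {j}.
elim: p w Hp => [|x p IH] w //= /andP[Ewx Hp].
apply: leq_trans (IH _ Hp) _.
apply: ltnW.
by move/forallP: Hs => /(_ w) /forallP /(_ x) /implyP; apply.
Qed.

Lemma sat_reach n (E : rel 'I_n) s i j :
  satisfies E s -> reach E i j -> (s j < s i)%N.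
Proof.
move=> Hs /existsP [w /andP [Eiw Cwj]].
apply: leq_ltn_trans (sat_connect Hs Cwj) _.
by move/forallP: Hs => /(_ i) /forallP /(_ w) /implyP; apply.
Qed.

Lemma connect_reach n (E : rel 'I_n) i j :
  connect E i j -> i != j -> reach E i j.
Proof.
move=> /connectP [[|w p] /= Hp ->]; first by rewrite eqxx.
case/andP: Hp => Eiw Hp _.
apply/existsP; exists w; rewrite Eiw /=.
by apply/connectP; exists p.
Qed.

Lemma disc_lt n (s r : {perm 'I_n}) i j :
  (s i < s j)%N -> (r j < r i)%N -> discordant s r i j.
Proof.
move=> h1 h2; rewrite /discordant.
rewrite nmulr_rlt0; last by rewrite subr_lt0 ltz_nat.
by rewrite subr_gt0 ltz_nat.
Qed.

Lemma disc_gt n (s r : {perm 'I_n}) i j :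
  (s j < s i)%N -> (r i < r j)%N -> discordant s r i j.
Proof.
move=> h1 h2; rewrite /discordant.
rewrite pmulr_rlt0; last by rewrite subr_gt0 ltz_nat.
by rewrite subr_lt0 ltz_nat.
Qed.

Lemma nodisc_gt n (s r : {perm 'I_n}) i j :
  (s j < s i)%N -> (r j < r i)%N -> ~~ discordant s r i j.
Proof.
move=> h1 h2; rewrite /discordant -Order.TotalTheory.leNgt.
apply: Order.POrderTheory.ltW; apply: mulr_gt0; by rewrite subr_gt0 ltz_nat.
Qed.

Lemma nodisc_lt n (s r : {perm 'I_n}) i j :
  (s i < s j)%N -> (r i < r j)%N -> ~~ discordant s r i j.
Proof.
move=> h1 h2; rewrite /discordant -Order.TotalTheory.leNgt.
apply: Order.POrderTheory.ltW; rewrite nmulr_rgt0; by rewrite subr_lt0 ltz_nat.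
Qed.

Lemma ord2_cases (i : 'I_2) : i = ord0 \/ i = ord_max.
Proof.
case: i => [[|[|k]] Hk]; [left|right|]; try by apply/val_inj.
by [].
Qed.

Lemma sat_lperm n (E : rel 'I_n) (L : rel 'I_n) (TL : total_order L) :
  (forall u, ~~ E u u) -> (forall u v, E u v -> L u v) ->
  satisfies E (lperm TL).
Proof.
move=> Eirr EL; apply/forallP => u; apply/forallP => v; apply/implyP => Euv.
rewrite !lpermE; apply: cnt_mono => //; first exact: EL.
by apply/eqP => e; subst v; move: (Eirr u); rewrite Euv.
Qed.

Theorem mainTheorem8 (n : nat) (E : rel 'I_n) :
  oriented_graph E ->
  (0 < #|[set s : {perm 'I_n} | satisfies E s]|)%N ->
  poset_dim (leG E) 2 ->
  \max_(p : {perm 'I_n} * {perm 'I_n} | satisfies E p.1 && satisfies E p.2)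
      dK p.1 p.2
  = #|incomparable_pairs E|.
Proof.
move=> [Eirr _] _ [[L [TL HL]] _].
apply/eqP; rewrite eqn_leq; apply/andP; split.
  apply/bigmax_leqP => [[s r]] /= /andP[Hs Hr].
  rewrite /dK; apply: subset_leq_card; apply/subsetP => [[i j]].
  rewrite !inE /= => /andP[Hij Hd]; rewrite Hij /=.
  apply/andP; split; apply/negP => Hre.
    by rewrite (negbTE (nodisc_gt (sat_reach Hs Hre) (sat_reach Hr Hre))) in Hd.
  by rewrite (negbTE (nodisc_lt (sat_reach Hs Hre) (sat_reach Hr Hre))) in Hd.
have EL : forall k u v, E u v -> L k u v.
  move=> k u v Euv; have : leG E u v by exact: connect1.
  by rewrite HL => /forallP; apply.
have LL : forall a b, L ord0 a b -> L ord_max a b -> leG E a b.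
  move=> a b h0 h1; rewrite HL; apply/forallP => k.
  by case: (ord2_cases k) => ->.
pose s0 := lperm (TL ord0); pose s1 := lperm (TL ord_max).
have H0 : satisfies E s0 by exact: sat_lperm Eirr (EL _).
have H1 : satisfies E s1 by exact: sat_lperm Eirr (EL _).
have := @leq_bigmax_cond _
  (fun p : {perm 'I_n} * {perm 'I_n} => satisfies E p.1 && satisfies E p.2)
  (fun p => dK p.1 p.2) (s0, s1) (introT andP (conj H0 H1)).
apply: leq_trans.
rewrite /dK; apply: subset_leq_card; apply/subsetP => [[i j]].
rewrite !inE /= => /and3P[Hij Nij Nji]; rewrite Hij /=.
have Dij : i != j by rewrite neq_ltn Hij.
have Dji : j != i by rewrite eq_sym.
have [_ [_ [_ T0]]] := TL ord0.
have [_ [_ [_ T1]]] := TL ord_max.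
case/orP: (T0 i j) => L0.
  have L1 : L ord_max j i.
    case/orP: (T1 i j) => // L1.
    by have := connect_reach (LL _ _ L0 L1) Dij; rewrite (negbTE Nij).
  apply: disc_gt.
    by rewrite /s0 !lpermE; apply: cnt_mono.
  by rewrite /s1 !lpermE; apply: cnt_mono.
have L1 : L ord_max i j.
  case/orP: (T1 i j) => // L1.
  by have := connect_reach (LL _ _ L0 L1) Dji; rewrite (negbTE Nji).
apply: disc_lt.
  by rewrite /s0 !lpermE; apply: cnt_mono.
by rewrite /s1 !lpermE; apply: cnt_mono.
Qed.
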